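(* Let $n\ge1$ and let $\mathbf s=(s_1,\dots,s_n)\in\mathbb C^n$ be typical, i.e. $s_i+s_j\neq0$ for all $i\neq j$. Then the restriction of $V(\mathbf s)$ to $W^n$ is a simple $W^n$-module.
   Context: $U(\mathfrak h_n)$ is the associative superalgebra generated by odd elements $\xi_1,\dots,\xi_n$ with $\xi_i\xi_j+\xi_j\xi_i=0$ for $i\neq j$, and $x_i=\xi_i^2$ (central); it is the enveloping algebra of the Cartan subalgebra of the queer Lie superalgebra $Q(n)$. $W^n\subset U(\mathfrak h_n)$ is the finite $W$-algebra of $Q(n)$ for the principal even nilpotent element, realized in $U(\mathfrak h_n)$ via the injective Harish-Chandra homomorphism; concretely it is the subalgebra generated by $u_k(0),u_k(1)$ ($1\le k\le n$), the even and odd parts of $\sum_{1\le i_1<\dots<i_k\le n}\prod_{j=1}^{k}(x_{i_j}+(-1)^{k-j}\xi_{i_j})$ (ordered product). For $\mathbf s\in\mathbb C^n$, $V(\mathbf s)$ is a simple $\mathbb Z_2$-graded $U(\mathfrak h_n)$-module on which each $x_i$ acts by the scalar $s_i$; it exists and is unique up to isomorphism and parity change. *)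

(* Defs.v *)
From mathcomp Require Import all_boot all_algebra.
From mathcomp Require Import reals.
From mathcomp Require Export complex.
Set Implicit Arguments. Unset Strict Implicit. Unset Printing Implicit Defensive.
Import GRing.Theory.
Local Open Scope ring_scope.

(* A Z_2-graded vector space is modelled as V = V0 (+) V1, i.e. the product
   type V0 * V1 (even part, odd part). Operators are functions V -> V. *)
Section Super.
Variables (F : fieldType) (V0 V1 : lmodType F).
Local Notation V := (V0 * V1)%type.

Definition is_linear_op (f : V -> V) : Prop :=
  forall (a : F) (u w : V), f (a *: u + w) = a *: f u + f w.

Definition is_odd_op (f : V -> V) : Prop :=
  (forall v0 : V0, (f (v0, 0)).1 = 0) /\ (forall v1 : V1, (f (0, v1)).2 = 0).

Inductive alg_gen (G : (V -> V) -> Prop) : (V -> V) -> Prop :=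
| ag_gen f : G f -> alg_gen G f
| ag_id : alg_gen G id
| ag_add f g : alg_gen G f -> alg_gen G g -> alg_gen G (fun v => f v + g v)
| ag_scale (c : F) f : alg_gen G f -> alg_gen G (fun v => c *: f v)
| ag_comp f g : alg_gen G f -> alg_gen G g -> alg_gen G (fun v => f (g v)).

Definition graded_submodule (G : (V -> V) -> Prop)
    (S0 : V0 -> Prop) (S1 : V1 -> Prop) : Prop :=
  [/\ S0 0, S1 0,
      (forall (a : F) u w, S0 u -> S0 w -> S0 (a *: u + w)),
      (forall (a : F) u w, S1 u -> S1 w -> S1 (a *: u + w)) &
      (forall f, alg_gen G f -> forall v0 v1, S0 v0 -> S1 v1 ->
         S0 (f (v0, v1)).1 /\ S1 (f (v0, v1)).2)].

Definition graded_simple (G : (V -> V) -> Prop) : Prop :=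
  (exists v : V, v != 0) /\
  forall S0 S1, graded_submodule G S0 S1 ->
    ((forall v0, S0 v0 -> v0 = 0) /\ (forall v1, S1 v1 -> v1 = 0)) \/
    ((forall v0, S0 v0) /\ (forall v1, S1 v1)).

Variables (n : nat) (xi : 'I_n -> V -> V).

Definition x_op (i : 'I_n) (v : V) : V := xi i (xi i v).

(* For L = [:: i_1; ...; i_k] (i_1 < ... < i_k) and J a set of positions,
   the action of the ordered monomial obtained from
   prod_{j=1}^k (x_{i_j} + (-1)^(k-j) xi_{i_j}) by choosing the xi-summand
   exactly at the positions in J (0-based positions: j-1).  The leftmost
   factor (j = 1) is applied last. *)
Definition mono_op (k : nat) (L : seq 'I_n) (J : {set 'I_k}) (v : V) : V :=
  foldr (fun (p : 'I_k * 'I_n) w =>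
           if p.1 \in J then (-1) ^+ (k - p.1.+1) *: xi p.2 w
           else x_op p.2 w)
        v (zip (enum 'I_k) L).

(* Action of u_k(b): the even (b = false, i.e. u_k(0)) resp. odd
   (b = true, i.e. u_k(1)) part of
   sum_{i_1 < ... < i_k} prod_{j=1}^k (x_{i_j} + (-1)^(k-j) xi_{i_j}).
   A monomial with |J| factors xi has parity |J| mod 2 (x even, xi odd). *)
Definition u_op (k : nat) (b : bool) (v : V) : V :=
  \sum_(A : {set 'I_n} | #|A| == k)
     \sum_(J : {set 'I_k} | odd #|J| == b) mono_op (enum A) J v.

Definition U_gens (f : V -> V) : Prop := exists i : 'I_n, f = xi i.

Definition W_gens (f : V -> V) : Prop :=
  exists (k : nat) (b : bool), [/\ (1 <= k)%N, (k <= n)%N & f = u_op k b].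

End Super.

(* Main.v *)
Require Import Defs.
From mathcomp Require Import all_boot all_algebra.
From mathcomp Require Import reals complex.
From mathcomp Require Import ring.
Set Implicit Arguments. Unset Strict Implicit. Unset Printing Implicit Defensive.
Import GRing.Theory.
Local Open Scope ring_scope.
Lemma lin0 (F : fieldType) (V0 V1 : lmodType F) (f : (V0 * V1)%type -> (V0 * V1)%type) :
  is_linear_op f -> f 0 = 0.
Proof.
move=> H; have := H 1 0 0; rewrite !scale1r addr0 => E.
by apply: (@addrI _ (f 0)); rewrite addr0 -E.
Qed.

Lemma linD (F : fieldType) (V0 V1 : lmodType F) (f : (V0 * V1)%type -> (V0 * V1)%type) u w :
  is_linear_op f -> f (u + w) = f u + f w.
Proof. by move=> H; have := H 1 u w; rewrite !scale1r. Qed.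

Lemma linZ (F : fieldType) (V0 V1 : lmodType F) (f : (V0 * V1)%type -> (V0 * V1)%type) a u :
  is_linear_op f -> f (a *: u) = a *: f u.
Proof. by move=> H; have := H a u 0; rewrite !addr0 (lin0 H) addr0. Qed.

Lemma linN (F : fieldType) (V0 V1 : lmodType F) (f : (V0 * V1)%type -> (V0 * V1)%type) u :
  is_linear_op f -> f (- u) = - f u.
Proof. by move=> H; rewrite -scaleN1r (linZ _ _ H) scaleN1r. Qed.

Lemma linB (F : fieldType) (V0 V1 : lmodType F) (f : (V0 * V1)%type -> (V0 * V1)%type) u w :
  is_linear_op f -> f (u - w) = f u - f w.
Proof. by move=> H; rewrite (linD _ _ H) (linN _ H). Qed.

Lemma linS (F : fieldType) (V0 V1 : lmodType F) (f : (V0 * V1)%type -> (V0 * V1)%type)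
   (I : Type) (r : seq I) (P : pred I) (G : I -> (V0 * V1)%type) :
  is_linear_op f -> f (\sum_(i <- r | P i) G i) = \sum_(i <- r | P i) f (G i).
Proof.
move=> H; apply: (big_morph f (fun x y => linD x y H) (lin0 H)).
Qed.

Definition pres (F : fieldType) (V0 V1 : lmodType F) (S0 : V0 -> Prop) (S1 : V1 -> Prop)
  (f : (V0 * V1)%type -> (V0 * V1)%type) : Prop :=
  forall v0 v1, S0 v0 -> S1 v1 -> S0 (f (v0, v1)).1 /\ S1 (f (v0, v1)).2.

Lemma pres_lin (F : fieldType) (V0 V1 : lmodType F) (S0 : V0 -> Prop) (S1 : V1 -> Prop) f g a :
  (forall (a : F) u w, S0 u -> S0 w -> S0 (a *: u + w)) ->
  (forall (a : F) u w, S1 u -> S1 w -> S1 (a *: u + w)) ->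
  pres S0 S1 f -> pres S0 S1 g -> pres S0 S1 (fun v => a *: f v + g v).
Proof.
move=> c0 c1 pf pg v0 v1 h0 h1; have [f0 f1] := pf v0 v1 h0 h1; have [g0 g1] := pg v0 v1 h0 h1.
by split; [apply: c0 | apply: c1].
Qed.

Lemma pres_comp (F : fieldType) (V0 V1 : lmodType F) (S0 : V0 -> Prop) (S1 : V1 -> Prop) f g :
  pres S0 S1 f -> pres S0 S1 g -> pres S0 S1 (fun v => f (g v)).
Proof.
move=> pf pg v0 v1 h0 h1; have [g0 g1] := pg v0 v1 h0 h1.
by have := pf _ _ g0 g1; case: (g (v0, v1)).
Qed.

Lemma pres_ext (F : fieldType) (V0 V1 : lmodType F) (S0 : V0 -> Prop) (S1 : V1 -> Prop) f g :
  (forall v, f v = g v) -> pres S0 S1 g -> pres S0 S1 f.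
Proof. by move=> e pg v0 v1 h0 h1; rewrite e; apply: pg. Qed.

Lemma pres_zero (F : fieldType) (V0 V1 : lmodType F) (S0 : V0 -> Prop) (S1 : V1 -> Prop) :
  S0 0 -> S1 0 -> pres S0 S1 (fun _ => 0).
Proof. by move=> z0 z1 v0 v1 _ _. Qed.
Lemma eig_zero (F : fieldType) (n : nat) (s : 'I_n -> F) (f : 'I_n -> F) (l : F) :
  (forall i j, i != j -> s i + s j != 0) ->
  \sum_j f j = 0 ->
  (forall m : 'I_n, s m * (\sum_(j : 'I_n | (m < j)%N) f j - \sum_(j : 'I_n | (j < m)%N) f j) = l * f m) ->
  forall m, f m = 0.
Proof.
move=> typ sum0 eig.
pose Phi (k : nat) := \sum_(j : 'I_n | (j < k)%N) f j.
have Phi0 : Phi 0%N = 0 by rewrite /Phi big_pred0.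
have Phin : Phi n = 0 by rewrite /Phi -[RHS]sum0; apply: eq_bigl => j; rewrite ltn_ord.
have PhiS : forall m : 'I_n, Phi m.+1 = Phi m + f m.
  move=> m; rewrite /Phi (bigD1 m) //= addrC; congr (_ + _).
  apply: eq_bigl => j; rewrite ltnS leq_eqVlt -val_eqE /=.
  by case: ltngtP; rewrite ?andbT ?andbF.
have Hgt : forall m : 'I_n, \sum_(j : 'I_n | (m < j)%N) f j = - Phi m.+1.
  move=> m; have H : \sum_j f j = Phi m.+1 + \sum_(j : 'I_n | (m < j)%N) f j.
    rewrite (bigID (fun j : 'I_n => (j < m.+1)%N)) /=; congr (_ + _); apply: eq_bigl => j; by rewrite ltnS -ltnNge.
  by move: H; rewrite sum0 => /eqP; rewrite eq_sym addrC addr_eq0 => /eqP.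
have rel : forall m (Hm : (m < n)%N), (l + s (Ordinal Hm)) * Phi m.+1 = (l - s (Ordinal Hm)) * Phi m.
  move=> m Hm; have := eig (Ordinal Hm); rewrite Hgt.
  have -> : f (Ordinal Hm) = Phi m.+1 - Phi m by rewrite (PhiS (Ordinal Hm)) /=; ring.
  move=> H; apply/eqP; rewrite -subr_eq0; apply/eqP.
  transitivity (l * (Phi m.+1 - Phi m) - s (Ordinal Hm) * (- Phi m.+1 - Phi m)); first by ring.
  by rewrite -H subrr.
have allPhi : forall k, (k <= n)%N -> Phi k = 0.
  move=> k kn; case: (boolP [exists m0 : 'I_n, (m0 < k)%N && (l + s m0 == 0)]).
    case/existsP => m0 /andP [lt0 /eqP e0].
    suff H : forall d, (k <= n - d)%N -> Phi (n - d)%N = 0.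
      by have := H (n - k)%N; rewrite subKn // leqnn => /(_ isT).
    elim=> [|d IH] Hk; first by rewrite subn0.
    have dn : (d.+1 < n)%N.
      have : (0 < n - d.+1)%N by apply: leq_trans Hk; apply: leq_ltn_trans lt0.
      by rewrite subn_gt0.
    have Hm : (n - d.+1 < n)%N by rewrite ltn_subrL (leq_ltn_trans _ dn).
    have Hm1 : (n - d.+1).+1 = (n - d)%N by rewrite subnSK // ltnW.
    have := rel _ Hm; rewrite Hm1 IH; last exact: (leq_trans Hk (leq_sub2l n (leqnSn d))).
    rewrite mulr0 => /esym/eqP; rewrite mulf_eq0 => /orP [|/eqP //].
    have -> : l = - s m0 by apply/eqP; rewrite -addr_eq0 e0.
    rewrite -opprD oppr_eq0 => /negPn; case/negP; apply: typ.
    apply/eqP => /(congr1 val) /= H0; move: lt0 Hk; rewrite H0 => lt0 Hk.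
    by move: (leq_ltn_trans Hk lt0); rewrite ltnn.
  move=> /existsPn Hno.
  suff H : forall j, (j <= k)%N -> Phi j = 0 by apply: H.
  elim=> [|j IH] jk; first exact: Phi0.
  have kn' : (j < n)%N by apply: leq_trans kn.
  have := rel _ kn'; rewrite IH; last exact: ltnW. rewrite mulr0 => /eqP; rewrite mulf_eq0 => /orP [|/eqP //].
  by move=> H; have := Hno (Ordinal kn'); rewrite /= jk H.
move=> m; have := PhiS m; rewrite (allPhi m.+1) ?ltn_ord // (allPhi m); last exact: ltnW. rewrite add0r.
by move=> ->.
Qed.
Definition Nmat (F : fieldType) (n : nat) (s : 'I_n -> F) : 'M[F]_n :=
  \matrix_(m, j) (if (m < j)%N then s m else if (j < m)%N then - s m else 0).

Lemma horner_mx_expand (F : fieldType) (n' : nat) (N : 'M[F]_n'.+1) (p : {poly F}) :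
  horner_mx N p = \sum_(i < size p) p`_i *: N ^+ i.
Proof.
rewrite -{1}(coefK p) poly_def rmorph_sum; apply: eq_bigr => i _.
by rewrite -mul_polyC rmorphM /= horner_mx_C rmorphXn /= horner_mx_X -mulmxE mul_scalar_mx.
Qed.

Lemma Nmat_col (F : fieldType) (n : nat) (s : 'I_n -> F) (phi : 'cV[F]_n) (m : 'I_n) :
  (Nmat s *m phi) m 0 =
  s m * (\sum_(j : 'I_n | (m < j)%N) phi j 0 - \sum_(j : 'I_n | (j < m)%N) phi j 0).
Proof.
rewrite mxE (big_mkcond (fun j : 'I_n => (m < j)%N)) (big_mkcond (fun j : 'I_n => (j < m)%N)) /=.
rewrite -sumrB mulr_sumr; apply: eq_bigr => j _; rewrite mxE.
case: ltngtP => _ /=; ring.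
Qed.


Lemma krylov_full (F : closedFieldType) (n' : nat) (s : 'I_n'.+1 -> F)
    (L : 'rV[F]_n'.+1 -> Prop) :
  (forall i j, i != j -> s i + s j != 0) ->
  L 0 -> (forall a u w, L u -> L w -> L (a *: u + w)) ->
  L (const_mx 1) -> (forall c, L c -> L (c *m Nmat s)) -> forall c, L c.
Proof.
move=> typ L0 Llin L1 LN.
pose u1 : 'rV[F]_n'.+1 := const_mx 1.
set N := Nmat s.
have Lsum : forall (r : 'I_n'.+1 -> F) (v : 'I_n'.+1 -> 'rV[F]_n'.+1),
    (forall i, L (v i)) -> L (\sum_i r i *: v i).
  move=> r v Lv; apply: (big_ind L) => //.
    by move=> x y Lx Ly; rewrite -(scale1r x); apply: Llin.
  by move=> i _; rewrite -(addr0 (r i *: v i)); apply: Llin.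
have LE : forall k, L (u1 *m N ^+ k).
  elim=> [|k IH]; first by rewrite expr0 mulmx1.
  by rewrite exprSr -mulmxE mulmxA; apply: LN.
pose E : 'M[F]_n'.+1 := \matrix_(k < n'.+1) (u1 *m N ^+ k).
case Eu: (E \in unitmx).
  move=> c; rewrite -(mulmxKV Eu c) mulmx_sum_row; apply: Lsum => i.
  by rewrite rowK; apply: LE.
have : \det E == 0 by move: Eu; rewrite unitmxE unitfE => /negbFE.
rewrite -det_tr => /det0P [v vnz vE].
pose psi := v^T.
have psinz : psi != 0 by apply: contra vnz => /eqP H; rewrite -(trmxK v) -/psi H trmx0.
have Ek : forall k : 'I_n'.+1, u1 *m N ^+ k *m psi = 0.
  move=> k.
  have : E *m psi = 0 by rewrite /psi -[E]trmxK -trmx_mul vE trmx0.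
  by move/(congr1 (row k)); rewrite row_mul rowK row0.
pose Ann (phi : 'cV[F]_n'.+1) := forall k, u1 *m N ^+ k *m phi = 0.
pose p := char_poly N.
have hp : horner_mx N p = 0 by apply: Cayley_Hamilton.
have pn : p`_n'.+1 = 1.
  by have := char_poly_monic N; move/monicP; rewrite lead_coefE size_char_poly.
have Apsi : Ann psi.
  have rec : forall k, \sum_(i < n'.+2) p`_i *: (u1 *m N ^+ (k + i) *m psi) = 0.
    move=> k; have := congr1 (fun M => u1 *m N ^+ k *m M *m psi) hp.
    rewrite /= horner_mx_expand size_char_poly mulmx0 mul0mx => H; rewrite -[RHS]H.
    rewrite mulmx_sumr mulmx_suml; apply: eq_bigr => i _.
    by rewrite -scalemxAr -scalemxAl exprD -mulmxE mulmxA.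
  suff H : forall k j, (j < n'.+1)%N -> u1 *m N ^+ (k + j) *m psi = 0.
    by move=> k; have := H k 0%N isT; rewrite addn0.
  elim=> [|k IH] j jn; first by rewrite add0n; apply: (Ek (Ordinal jn)).
  case: (ltnP j.+1 n'.+1) => jn'.
    by rewrite addSnnS; apply: IH.
  have jeq : j = n' by apply/eqP; rewrite eqn_leq -ltnS jn -ltnS.
  have := rec k; rewrite big_ord_recr /= pn scale1r.
  rewrite big1 ?add0r; last by move=> i _; rewrite IH ?scaler0.
  by rewrite jeq addSnnS.
have AnnM : forall phi, Ann phi -> Ann (N *m phi).
  by move=> phi Aphi k; rewrite mulmxA -(mulmxA u1) mulmxE -exprSr; apply: Aphi.
have AnnB : forall z phi, Ann phi -> Ann ((N - z%:M) *m phi).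
  move=> z phi Aphi k; rewrite mulmxBl mul_scalar_mx mulmxBr.
  by rewrite -scalemxAr (AnnM _ Aphi) Aphi scaler0 subr0.
have AnnP : forall (rs : seq F) phi, Ann phi ->
    Ann ((\prod_(z <- rs) (N - z%:M)) *m phi).
  elim=> [|z rs IH] phi Aphi; first by rewrite big_nil mul1mx.
  by rewrite big_cons -mulmxE -mulmxA; apply: AnnB; apply: IH.
have Eig : forall (rs : seq F) phi, Ann phi -> phi != 0 ->
    (\prod_(z <- rs) (N - z%:M)) *m phi = 0 ->
    exists phi' l, [/\ Ann phi', phi' != 0 & N *m phi' = l *: phi'].
  elim=> [|z rs IH] phi Aphi phinz.
    by rewrite big_nil mul1mx => H; move: phinz; rewrite H eqxx.
  rewrite big_cons -mulmxE -mulmxA.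
  case: (eqVneq ((\prod_(z <- rs) (N - z%:M)) *m phi) 0) => [H0|H0].
    by move=> _; apply: (IH phi).
  move=> H; exists ((\prod_(z <- rs) (N - z%:M)) *m phi), z; split => //.
    exact: AnnP.
  by move/eqP: H; rewrite mulmxBl mul_scalar_mx subr_eq0 => /eqP.
have [rs prs] := closed_field_poly_normal p.
have hprod : \prod_(z <- rs) (N - z%:M) = 0.
  move: hp; rewrite prs (monicP (char_poly_monic N)) scale1r rmorph_prod => <-.
  by apply: eq_bigr => z _; rewrite rmorphB /= horner_mx_X horner_mx_C.
have [phi [l [Aphi phinz Nphi]]] := Eig rs psi Apsi psinz (ltac:(by rewrite hprod mul0mx)).
exfalso; move: phinz; apply/negP; rewrite negbK; apply/eqP/matrixP => i j.
rewrite (ord1 j) mxE.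
apply: (@eig_zero F n'.+1 s (fun j => phi j 0) l typ).
  have := congr1 (fun M : 'M_1 => M 0 0) (Aphi 0%N); rewrite /= expr0 mulmx1 mxE /= => H.
  by rewrite mxE in H; rewrite -[RHS]H; apply: eq_bigr => k _; rewrite mxE mul1r.
move=> m; rewrite -Nmat_col -/N Nphi mxE //.
Qed.
Lemma sorted_enumA (n : nat) (A : {set 'I_n}) :
  sorted (relpre val ltn) (enum A).
Proof.
rewrite /enum_mem -enumT; apply: sorted_filter.
  by move=> x y z /= ; apply: ltn_trans.
by rewrite -sorted_map val_enum_ord iota_ltn_sorted.
Qed.

Lemma enum_set2_lt (n : nat) (a b : 'I_n) : (a < b)%N -> enum [set a; b] = [:: a; b].
Proof.
move=> ab; have anb : a != b by rewrite -val_eqE /= neq_ltn ab.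
apply: (@sorted_eq _ (relpre val ltn)).
- by move=> x y z /=; apply: ltn_trans.
- by move=> x y /= /andP [h1 h2]; move: (ltn_trans h1 h2); rewrite ltnn.
- exact: sorted_enumA.
- by rewrite /= ab.
apply: uniq_perm; first exact: enum_uniq.
  by rewrite /= inE anb.
by move=> x; rewrite mem_enum !inE.
Qed.

Lemma enum_card2 (n : nat) (A : {set 'I_n}) : #|A| = 2%N ->
  exists a b : 'I_n, (a < b)%N /\ enum A = [:: a; b].
Proof.
move=> cA; have := sorted_enumA A; move: cA; rewrite cardE.
case: (enum A) => [|a [|b [|c s]]] //= _ /andP [ab _].
by exists a, b.
Qed.

Lemma sum_card1 (T : finType) (x0 : T) (M : nmodType) (G : seq T -> M) :
  \sum_(A : {set T} | #|A| == 1%N) G (enum A) = \sum_(i : T) G [:: i].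
Proof.
rewrite (reindex_onto (fun i => [set i]) (fun A => nth x0 (enum A) 0)) /=.
  apply: eq_big => [i|i _]; last by rewrite enum_set1.
  by rewrite cards1 enum_set1 /= eqxx.
by move=> A /cards1P [x ->]; rewrite enum_set1.
Qed.

Lemma sum_card2 (n : nat) (x0 : 'I_n) (M : nmodType) (G : seq 'I_n -> M) :
  \sum_(A : {set 'I_n} | #|A| == 2%N) G (enum A) =
  \sum_(i : 'I_n) \sum_(j : 'I_n | (i < j)%N) G [:: i; j].
Proof.
rewrite pair_big_dep /=.
rewrite (reindex_onto (fun p : 'I_n * 'I_n => [set p.1; p.2])
   (fun A => (nth x0 (enum A) 0, nth x0 (enum A) 1))) /=.
  apply: eq_big => [[i j]|[i j]] /=.
    case: (ltnP i j) => ij.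
      by rewrite enum_set2_lt //= cards2 -val_eqE /= neq_ltn ij /= eqxx.
    apply/negbTE/negP => /andP [/eqP c2 /eqP E].
    have [a [b [ab eA]]] := enum_card2 c2.
    move: E; rewrite eA /= => [[ea eb]]; move: ij; rewrite -ea -eb => ij.
    by move: (leq_trans ab ij); rewrite ltnn.
  move=> /andP [/eqP c2 /eqP E].
  have [a [b [ab eA]]] := enum_card2 c2.
  by move: E; rewrite eA /= => [[ea eb]]; rewrite ea eb.
move=> A /eqP c2; have [a [b [ab eA]]] := enum_card2 c2.
by apply/setP => x; rewrite eA /= !inE -mem_enum eA !inE.
Qed.

Definition Xi (F : fieldType) (V0 V1 : lmodType F) (n : nat)
  (xi : 'I_n -> (V0 * V1)%type -> (V0 * V1)%type) (c : 'rV[F]_n) (v : (V0 * V1)%type) :=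
  \sum_m c 0 m *: xi m v.

Lemma Xi_lin (F : fieldType) (V0 V1 : lmodType F) (n : nat)
  (xi : 'I_n -> (V0 * V1)%type -> (V0 * V1)%type) c :
  (forall i, is_linear_op (xi i)) -> is_linear_op (Xi xi c).
Proof.
move=> lin a u w; rewrite /Xi scaler_sumr -big_split; apply: eq_bigr => m _ /=.
by rewrite lin scalerDr !scalerA mulrC.
Qed.

Lemma subsubr (M : zmodType) (a b c : M) : (a - b) - (a - c) = c - b.
Proof. by rewrite opprB addrC addrA subrK. Qed.

Lemma triple (F : fieldType) (V0 V1 : lmodType F) (n : nat)
  (xi : 'I_n -> (V0 * V1)%type -> (V0 * V1)%type) (s : 'I_n -> F) :
  (forall i, is_linear_op (xi i)) ->
  (forall (i j : 'I_n) v, i != j -> xi i (xi j v) + xi j (xi i v) = 0) ->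
  (forall i v, x_op xi i v = s i *: v) ->
  forall i j m w, i != j ->
  xi i (xi j (xi m w)) - xi m (xi i (xi j w)) =
  (2 * s m) *: ((m == j)%:R *: xi i w - (m == i)%:R *: xi j w).
Proof.
move=> lin anti xs i j m w ij.
have sq : forall k w, xi k (xi k w) = s k *: w by move=> k w'; apply: xs.
have anti' : forall a b w, a != b -> xi a (xi b w) = - xi b (xi a w).
  by move=> a b w' ab; apply/eqP; rewrite -addr_eq0; apply/eqP; apply: anti.
have ji : j != i by rewrite eq_sym.
case: (eqVneq m j) => [-> | mj].
  have e1 : xi i (xi j (xi j w)) = s j *: xi i w by rewrite sq (linZ _ _ (lin i)).
  have e2 : xi j (xi i (xi j w)) = - (s j *: xi i w) by rewrite (anti' i j w ij) (linN _ (lin j)) sq.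
  rewrite e1 e2 ?eqxx ?(negbTE ji) ?(negbTE ij) scale1r scale0r subr0 opprK -scalerDl.
  by congr (_ *: _); ring.
case: (eqVneq m i) => [-> | mi].
  have e1 : xi i (xi j (xi i w)) = - (s i *: xi j w) by rewrite (anti' j i w ji) (linN _ (lin i)) sq.
  have e2 : xi i (xi i (xi j w)) = s i *: xi j w by rewrite sq.
  rewrite e1 e2 ?eqxx ?(negbTE ij) ?(negbTE ji) scale1r scale0r sub0r -opprD -scalerDl scalerN.
  by congr (- (_ *: _)); ring.
have e1 : xi i (xi j (xi m w)) = xi m (xi i (xi j w)).
  have jm : j != m by rewrite eq_sym.
  have im : i != m by rewrite eq_sym.
  rewrite (anti' j m w jm) (linN _ (lin i)) (anti' i m _ im).
  by rewrite opprK.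
by rewrite e1 subrr ?(negbTE mj) ?(negbTE mi) !scale0r subrr scaler0.
Qed.

Lemma sum_delta (F : fieldType) (n : nat) (g : 'I_n -> F) j :
  \sum_m g m * (m == j)%:R = g j.
Proof.
rewrite (bigD1 j) //= eqxx mulr1 big1 ?addr0 // => m /negbTE ->; by rewrite mulr0.
Qed.

Lemma pair_comm (F : fieldType) (V0 V1 : lmodType F) (n : nat)
  (xi : 'I_n -> (V0 * V1)%type -> (V0 * V1)%type) (s : 'I_n -> F) :
  (forall i, is_linear_op (xi i)) ->
  (forall (i j : 'I_n) v, i != j -> xi i (xi j v) + xi j (xi i v) = 0) ->
  (forall i v, x_op xi i v = s i *: v) ->
  forall i j c w, i != j ->
  xi i (xi j (Xi xi c w)) - Xi xi c (xi i (xi j w)) =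
  (2 * (c 0 j * s j)) *: xi i w - (2 * (c 0 i * s i)) *: xi j w.
Proof.
move=> lin anti xs i j c w ij.
rewrite /Xi (linS _ _ _ (lin j)) (linS _ _ _ (lin i)) -sumrB.
under eq_bigr => m _ do
  rewrite (linZ _ _ (lin j)) (linZ _ _ (lin i)) -scalerBr (triple lin anti xs m w ij)
          scalerA scalerBr !scalerA.
rewrite sumrB -!scaler_suml.
have h1 : \sum_i0 c 0 i0 * (2 * s i0) * (i0 == j)%:R = 2 * (c 0 j * s j).
  by rewrite (sum_delta (fun m => c 0 m * (2 * s m))); ring.
have h2 : \sum_i0 c 0 i0 * (2 * s i0) * (i0 == i)%:R = 2 * (c 0 i * s i).
  by rewrite (sum_delta (fun m => c 0 m * (2 * s m))); ring.
by rewrite h1 h2.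
Qed.

Lemma u2_comm (F : fieldType) (V0 V1 : lmodType F) (n : nat)
  (xi : 'I_n -> (V0 * V1)%type -> (V0 * V1)%type) (s : 'I_n -> F) :
  (forall i, is_linear_op (xi i)) ->
  (forall (i j : 'I_n) v, i != j -> xi i (xi j v) + xi j (xi i v) = 0) ->
  (forall i v, x_op xi i v = s i *: v) ->
  forall (c : 'rV[F]_n) (v : (V0 * V1)%type),
  let T := fun w : (V0 * V1)%type => \sum_(i : 'I_n) \sum_(j : 'I_n | (i < j)%N) (s i * s j *: w - xi i (xi j w)) in
  T (Xi xi c v) - Xi xi c (T v) = 2 *: Xi xi (c *m Nmat s) v.
Proof.
move=> lin anti xs c v T.
have XL := Xi_lin c lin.
have XT : Xi xi c (T v) = \sum_(i : 'I_n) \sum_(j : 'I_n | (i < j)%N) Xi xi c (s i * s j *: v - xi i (xi j v)).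
  rewrite /T (linS _ _ _ XL); apply: eq_bigr => i _; by rewrite (linS _ _ _ XL).
rewrite XT /T -sumrB.
transitivity (\sum_(i : 'I_n) \sum_(j : 'I_n | (i < j)%N)
   ((2 * (c 0 i * s i)) *: xi j v - (2 * (c 0 j * s j)) *: xi i v)).
  apply: eq_bigr => i _; rewrite -sumrB; apply: eq_bigr => j ij.
  have inj : i != j by rewrite -val_eqE /= neq_ltn ij.
  rewrite (linB _ _ XL) (linZ _ _ XL) subsubr -opprB (pair_comm lin anti xs c v inj) opprB.
  done.
have R : 2 *: Xi xi (c *m Nmat s) v =
    \sum_m \sum_k (2 * (c 0 m * Nmat s m k)) *: xi k v.
  rewrite /Xi scaler_sumr exchange_big /=; apply: eq_bigr => k _.
  rewrite mxE scalerA mulr_sumr scaler_suml; apply: eq_bigr => m _ //.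
rewrite R.
under eq_bigr => i _ do rewrite sumrB.
rewrite sumrB.
under eq_bigr => i _ do rewrite big_mkcond.
under [X in _ - X]eq_bigr => i _ do rewrite big_mkcond.
rewrite [X in _ - X]exchange_big /= -sumrB; apply: eq_bigr => m _.
rewrite -sumrB; apply: eq_bigr => k _; rewrite mxE.
case: ltngtP => _ /=.
- by rewrite subr0.
- by rewrite sub0r -scaleNr; congr (_ *: _); ring.
- by rewrite subr0 mulr0 mulr0 scale0r.
Qed.

Lemma setT_card (k : nat) (J : {set 'I_k}) : #|J| = k -> J = setT.
Proof. by move=> cJ; apply/eqP; rewrite eqEcard subsetT cardsT card_ord cJ leqnn. Qed.

Lemma u1_eq (F : fieldType) (V0 V1 : lmodType F) (n' : nat)
  (xi : 'I_n'.+1 -> (V0 * V1)%type -> (V0 * V1)%type) v :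
  u_op xi 1 true v = \sum_i xi i v.
Proof.
rewrite /u_op (sum_card1 ord0 (fun L => \sum_(J : {set 'I_1} | odd #|J| == true) mono_op xi L J v)).
apply: eq_bigr => i _.
rewrite (bigD1 setT) /=; last by rewrite cardsT card_ord.
rewrite big1 ?addr0.
  by rewrite /mono_op enum_ordSl enum_ord0 /= in_setT expr0 scale1r.
move=> J /andP [oJ nT]; exfalso; move/negP: nT; apply; apply/eqP; apply: setT_card.
have : (#|J| <= 1)%N by rewrite -[X in (_ <= X)%N](card_ord 1) max_card.
by case: #|J| oJ => [|[|]].
Qed.

Lemma u2_eq (F : fieldType) (V0 V1 : lmodType F) (n' : nat)
  (xi : 'I_n'.+1 -> (V0 * V1)%type -> (V0 * V1)%type) (s : 'I_n'.+1 -> F) :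
  (forall i, is_linear_op (xi i)) ->
  (forall i v, x_op xi i v = s i *: v) -> forall v,
  u_op xi 2 false v =
  \sum_(i : 'I_n'.+1) \sum_(j : 'I_n'.+1 | (i < j)%N) (s i * s j *: v - xi i (xi j v)).
Proof.
move=> lin xs v.
rewrite /u_op (sum_card2 ord0 (fun L => \sum_(J : {set 'I_2} | odd #|J| == false) mono_op xi L J v)).
apply: eq_bigr => i _; apply: eq_bigr => j ij.
rewrite (bigD1 set0) ?cards0 //= (bigD1 setT) /=; last first.
  rewrite cardsT card_ord /=; apply/eqP => /setP /(_ ord0); by rewrite !inE.
rewrite big1 ?addr0.
  rewrite /mono_op !enum_ordSl enum_ord0 /= !in_set0 !in_setT !xs scalerA.
  by rewrite expr0 expr1 scale1r scaleN1r.
move=> J /andP [/andP [oJ n0] nT]; exfalso.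
have : (#|J| <= 2)%N by rewrite -[X in (_ <= X)%N](card_ord 2) max_card.
case cJ: #|J| oJ => [|[|[|]]] //= _ _.
  by move/eqP: n0; apply; apply/eqP; rewrite -cards_eq0 cJ.
by move/eqP: nT; apply; apply: setT_card.
Qed.

Lemma pres_scale (F : fieldType) (V0 V1 : lmodType F) (S0 : V0 -> Prop) (S1 : V1 -> Prop) f a :
  S0 0 -> S1 0 ->
  (forall (a : F) u w, S0 u -> S0 w -> S0 (a *: u + w)) ->
  (forall (a : F) u w, S1 u -> S1 w -> S1 (a *: u + w)) ->
  pres S0 S1 f -> pres S0 S1 (fun v => a *: f v).
Proof.
move=> z0 z1 c0 c1 pf; apply: (pres_ext (g := fun v => a *: f v + (fun _ => 0) v)).
  by move=> v; rewrite addr0.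
by apply: pres_lin => //; apply: pres_zero.
Qed.

Lemma pres_sub (F : fieldType) (V0 V1 : lmodType F) (S0 : V0 -> Prop) (S1 : V1 -> Prop) f g :
  (forall (a : F) u w, S0 u -> S0 w -> S0 (a *: u + w)) ->
  (forall (a : F) u w, S1 u -> S1 w -> S1 (a *: u + w)) ->
  pres S0 S1 f -> pres S0 S1 g -> pres S0 S1 (fun v => f v - g v).
Proof.
move=> c0 c1 pf pg; apply: (pres_ext (g := fun v => (-1) *: g v + f v)).
  by move=> v; rewrite scaleN1r addrC.
exact: pres_lin.
Qed.

Lemma main_aux (R : realType) (n' : nat) (s : 'I_n'.+1 -> R[i])
    (V0 V1 : lmodType R[i]) (xi : 'I_n'.+1 -> (V0 * V1)%type -> (V0 * V1)%type) :
  (forall i j : 'I_n'.+1, i != j -> s i + s j != 0) ->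
  (forall i, is_linear_op (xi i)) ->
  (forall (i j : 'I_n'.+1) v, i != j -> xi i (xi j v) + xi j (xi i v) = 0) ->
  (forall i v, x_op xi i v = s i *: v) ->
  graded_simple (U_gens xi) ->
  graded_simple (W_gens xi).
Proof.
move=> typ lin anti xs [nz Usimp].
split => // S0 S1 [S00 S10 S0c S1c Wst].
have pW : forall f, W_gens xi f -> pres S0 S1 f.
  by move=> f Wf v0 v1 h0 h1; apply: (Wst f (ag_gen Wf)).
pose L (c : 'rV[R[i]]_n'.+1) := pres S0 S1 (Xi xi c).
have Lall : forall c, L c.
  apply: (krylov_full typ).
  - apply: (pres_ext (g := fun _ => 0)); last exact: pres_zero.
    by move=> v; rewrite /Xi big1 // => m _; rewrite mxE scale0r.
  - move=> a u w Lu Lw.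
    apply: (pres_ext (g := fun v => a *: Xi xi u v + Xi xi w v)); last exact: pres_lin.
    move=> v; rewrite /Xi scaler_sumr -big_split; apply: eq_bigr => m _ /=.
    by rewrite !mxE scalerDl scalerA.
  - apply: (pres_ext (g := u_op xi 1 true)).
      by move=> v; rewrite u1_eq /Xi; apply: eq_bigr => m _; rewrite mxE scale1r.
    by apply: pW; exists 1%N, true; split.
  - move=> c Lc; rewrite /L in Lc *; clear L.
    move: s xi typ lin anti xs nz Usimp Wst pW c Lc.
    case: n' => [|n''] s xi typ lin anti xs nz Usimp Wst pW c Lc.
      apply: (pres_ext (g := fun _ => 0)); last exact: pres_zero.
      move=> v; rewrite /Xi big1 // => j _; rewrite mxE big1 ?scale0r // => m _.
      by rewrite mxE (ord1 m) (ord1 j) /= mulr0.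
    have two : (2 : R[i]) != 0 by rewrite Num.Theory.pnatr_eq0.
    pose U := u_op xi 2 false.
    apply: (pres_ext (g := fun v => 2^-1 *: (U (Xi xi c v) - Xi xi c (U v)))).
      move=> v; rewrite /U !(u2_eq lin xs) (u2_comm lin anti xs c v) scalerA mulVf //.
      by rewrite scale1r.
    apply: pres_scale => //; apply: pres_sub => //.
      by apply: pres_comp => //; apply: pW; exists 2%N, false.
    by apply: pres_comp => //; apply: pW; exists 2%N, false.
have key : forall i, pres S0 S1 (xi i).
  move=> i; apply: (pres_ext (g := Xi xi (delta_mx 0 i))); last exact: Lall.
  move=> v; rewrite /Xi (bigD1 i) //= mxE !eqxx scale1r big1 ?addr0 // => m mi.
  by rewrite mxE (negbTE mi) andbF scale0r.
have allU : forall f, alg_gen (U_gens xi) f -> pres S0 S1 f.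
  move=> f; elim=> {f} [f [i ->]| |f g _ pf _ pg|c f _ pf|f g _ pf _ pg].
- exact: key.
- by move=> v0 v1 h0 h1; split.
- apply: (pres_ext (g := fun v => 1 *: f v + g v)); last exact: pres_lin.
  by move=> v; rewrite scale1r.
- exact: pres_scale.
- exact: pres_comp.
by apply: (Usimp S0 S1); split.
Qed.

Theorem theorem4p2 (R : realType) (n : nat) (s : 'I_n -> R[i])
    (V0 V1 : lmodType R[i]) (xi : 'I_n -> (V0 * V1)%type -> (V0 * V1)%type) :
  (0 < n)%N ->
  (* s is typical *)
  (forall i j : 'I_n, i != j -> s i + s j != 0) ->
  (* V = V0 (+) V1 is a Z_2-graded U(h_n)-module, xi_i acting by odd operators *)
  (forall i, is_linear_op (xi i)) ->
  (forall i, is_odd_op (xi i)) ->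
  (forall (i j : 'I_n) v, i != j -> xi i (xi j v) + xi j (xi i v) = 0) ->
  (* x_i = xi_i^2 acts by the scalar s_i *)
  (forall i v, x_op xi i v = s i *: v) ->
  (* V is simple as a Z_2-graded U(h_n)-module, i.e. V = V(s) *)
  graded_simple (U_gens xi) ->
  (* then its restriction to W^n is simple *)
  graded_simple (W_gens xi).
Proof.
move: s xi; case: n => [|n'] s xi npos; first by exfalso; move: npos; apply/negP; rewrite ltnn.
move=> typ lin _ anti xs; exact: (main_aux typ lin anti xs).
Qed.
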